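(* Let $n\ge 0$, let $a_{n,0},\dots,a_{n,n}\in\mathbb C$, and let $P_n$ be the polynomial associated to $\{a_{n,k}\}_{k=0}^n$, i.e. $\sum_{k=0}^n a_{n,k}q^kp^nq^{n-k}=P_n(z)$ in $\mathcal A$. Then for $0\le k\le n$, $$a_{n,k}=\frac{1}{\imath^{n}n!}\sum_{j=0}^{n-k}(-1)^{n-k-j}\binom{n+1}{n-k-j}P_n\!\left(\imath\left(j+\tfrac12\right)\right).$$ Equivalently, writing $P_n(z)=\sum_{r=0}^n b_{n,r}z^r$, $$a_{n,k}=\frac{1}{\imath^{n}n!}\sum_{j=0}^{n-k}(-1)^{n-k-j}\binom{n+1}{n-k-j}\sum_{r=0}^{n}b_{n,r}\,\imath^{r}\left(j+\tfrac12\right)^{r}.$$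
   Context: $\imath=\sqrt{-1}$. $\mathcal{A}$ denotes the quotient of the free associative $\mathbb{C}$-algebra on two noncommuting generators $p,q$ by the two-sided ideal generated by $qp-pq-\imath$, and $z=\tfrac12(qp+pq)\in\mathcal A$. For $n\ge0$ and complex numbers $a_{n,0},\dots,a_{n,n}$, there is a unique polynomial $P_n\in\mathbb{C}[X]$ of degree at most $n$ with $\sum_{k=0}^n a_{n,k}q^kp^nq^{n-k}=P_n(z)$ in $\mathcal A$; it is called the polynomial associated to $\{a_{n,k}\}$. *)

(* Defs.v *)
From HB Require Import structures.
From mathcomp Require Import all_boot all_order all_algebra.
Set Implicit Arguments. Unset Strict Implicit. Unset Printing Implicit Defensive.
Import Order.TTheory GRing.Theory Num.Theory.
Local Open Scope ring_scope.

Definition weyl_z (C : fieldType) (B : algType C) (p q : B) : B :=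
  (2%:R : C)^-1 *: (q * p + p * q).

Definition weyl_rel (C : numClosedFieldType) (B : algType C) (p q : B) : Prop :=
  q * p - p * q = 'i%:A.

(* A is the quotient
   of the free algebra by qp - pq - i; an identity between (images of)
   noncommutative polynomials in p, q holds in A iff it holds for every
   C-algebra B and every p, q in B satisfying the relation (universal
   property of the quotient; A itself is such a B). *)
Definition holds_in_weyl (C : numClosedFieldType) (n : nat) (a : nat -> C)
    (P : {poly C}) : Prop :=
  forall (B : algType C) (p q : B), weyl_rel p q ->
    \sum_(k < n.+1) a k *: (q ^+ k * p ^+ n * q ^+ (n - k))
    = \sum_(r < size P) P`_r *: (weyl_z p q) ^+ r.

Definition associated_poly (C : numClosedFieldType) (n : nat) (a : nat -> C)
    (P : {poly C}) : Prop :=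
  (size P <= n.+1)%N /\ holds_in_weyl n a P.

(* Main.v *)
Require Import Defs.
From HB Require Import structures.
From mathcomp Require Import all_boot all_order all_algebra zify ring.
From mathcomp Require Import boolp.
Import Order.TTheory GRing.Theory Num.Theory.
Local Open Scope ring_scope.

Definition Op (R : fieldType) : Type := nat -> {poly R}.
HB.instance Definition _ (R : fieldType) := gen_eqMixin (Op R).
HB.instance Definition _ (R : fieldType) := gen_choiceMixin (Op R).

Section OpDefs.
Variable R : fieldType.
Implicit Types A B D : Op R.

Definition op0 : Op R := fun _ => 0.
Definition opN A : Op R := fun j => - A j.
Definition opD A B : Op R := fun j => A j + B j.
Lemma opDA : associative opD.
Proof. by move=> A B D; apply: funext => j; rewrite /opD addrA. Qed.
Lemma opDC : commutative opD.
Proof. by move=> A B; apply: funext => j; rewrite /opD addrC. Qed.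
Lemma op0D : left_id op0 opD.
Proof. by move=> A; apply: funext => j; rewrite /opD /op0 add0r. Qed.
Lemma opND : left_inverse op0 opN opD.
Proof. by move=> A; apply: funext => j; rewrite /opD /op0 /opN addNr. Qed.
End OpDefs.

HB.instance Definition _ (R : fieldType) :=
  GRing.isZmodule.Build (Op R) (@opDA R) (@opDC R) (@op0D R) (@opND R).

Section OpScale.
Variable R : fieldType.
Implicit Types A B D : Op R.
Definition opZ (a : R) A : Op R := fun j => a *: A j.
Lemma opZA a b A : opZ a (opZ b A) = opZ (a * b) A.
Proof. by apply: funext => j; rewrite /opZ scalerA. Qed.
Lemma opZ1 : left_id 1 opZ.
Proof. by move=> A; apply: funext => j; rewrite /opZ scale1r. Qed.
Lemma opZDr : right_distributive opZ +%R.
Proof. by move=> a A B; apply: funext => j; rewrite /opZ scalerDr. Qed.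
Lemma opZDl A : {morph opZ^~ A : a b / a + b}.
Proof. by move=> a b; apply: funext => j; rewrite /opZ scalerDl. Qed.
End OpScale.

HB.instance Definition _ (R : fieldType) :=
  GRing.Zmodule_isLmodule.Build R (Op R) (@opZA R) (@opZ1 R) (@opZDr R) (@opZDl R).

Section OpApp.
Variable R : fieldType.
Implicit Types A B D : Op R.

Lemma addOpE A B j : (A + B) j = A j + B j. Proof. by []. Qed.
Lemma oppOpE A j : (- A) j = - A j. Proof. by []. Qed.
Lemma zeroOpE j : (0 : Op R) j = 0. Proof. by []. Qed.
Lemma scaleOpE a A j : (a *: A) j = a *: A j. Proof. by []. Qed.
Lemma sumOpE I (r : seq I) (P : pred I) (F : I -> Op R) j :
  (\sum_(i <- r | P i) F i) j = \sum_(i <- r | P i) F i j.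
Proof. by apply: (big_morph (fun A : Op R => A j)). Qed.

Definition app A (v : {poly R}) : {poly R} := \sum_(r < size v) v`_r *: A r.

Lemma app_wide N A (v : {poly R}) : (size v <= N)%N -> app A v = \sum_(r < N) v`_r *: A r.
Proof.
move=> vN; rewrite /app (big_ord_widen N (fun r => v`_r *: A r) vN) big_mkcond.
apply: eq_bigr => r _; case: ifP => // /negbT; rewrite -leqNgt => h.
by rewrite nth_default // scale0r.
Qed.

Lemma app_add A (u v : {poly R}) : app A (u + v) = app A u + app A v.
Proof.
rewrite !(@app_wide (maxn (size u) (size v))) ?leq_maxl ?leq_maxr ?size_add //.
by rewrite -big_split; apply: eq_bigr => r _; rewrite coefD scalerDl.
Qed.

Lemma app_scale A a (v : {poly R}) : app A (a *: v) = a *: app A v.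
Proof.
rewrite !(@app_wide (size v)) ?size_scale_leq //.
by rewrite scaler_sumr; apply: eq_bigr => r _; rewrite coefZ scalerA.
Qed.

Lemma app0 A : app A 0 = 0.
Proof. by rewrite /app size_poly0 big_ord0. Qed.

Lemma app_sum A I (r : seq I) (P : pred I) (F : I -> {poly R}) :
  app A (\sum_(i <- r | P i) F i) = \sum_(i <- r | P i) app A (F i).
Proof. by apply: (big_morph (app A)) => [u v|]; rewrite ?app_add ?app0. Qed.

Lemma appD A B (v : {poly R}) : app (A + B) v = app A v + app B v.
Proof. by rewrite /app -big_split; apply: eq_bigr => r _; rewrite addOpE scalerDr. Qed.

Lemma appZ a A (v : {poly R}) : app (a *: A) v = a *: app A v.
Proof. by rewrite /app scaler_sumr; apply: eq_bigr => r _; rewrite scaleOpE !scalerA mulrC. Qed.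

Definition op1 : Op R := fun j => 'X^j.
Definition opM A B : Op R := fun j => app A (B j).

Lemma appX A j : app A 'X^j = A j.
Proof.
rewrite /app size_polyXn big_ord_recr /= big1 ?add0r => [|r _].
  by rewrite coefXn eqxx scale1r.
by rewrite coefXn (ltn_eqF (ltn_ord r)) scale0r.
Qed.

Lemma app1 (v : {poly R}) : app op1 v = v.
Proof. by rewrite /app /op1 -poly_def coefK. Qed.

Lemma appM A B (v : {poly R}) : app (opM A B) v = app A (app B v).
Proof.
rewrite {3}/app app_sum {1}/app /opM; apply: eq_bigr => r _.
by rewrite -/(app A (B r)) app_scale.
Qed.

Lemma opMA : associative opM.
Proof. by move=> A B D; apply: funext => j; rewrite /opM appM. Qed.
Lemma op1M : left_id op1 opM.
Proof. by move=> A; apply: funext => j; rewrite /opM app1. Qed.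
Lemma opM1 : right_id op1 opM.
Proof. by move=> A; apply: funext => j; rewrite /opM /op1 appX. Qed.
Lemma opMDl : left_distributive opM +%R.
Proof. by move=> A B D; apply: funext => j; rewrite /opM addOpE appD. Qed.
Lemma opMDr : right_distributive opM +%R.
Proof. by move=> A B D; apply: funext => j; rewrite /opM !addOpE app_add. Qed.
Lemma op1_neq0 : op1 != 0.
Proof.
apply/eqP => /(congr1 (fun A : Op R => A 0%N)).
by rewrite zeroOpE /op1 expr0; apply/eqP; exact: oner_neq0.
Qed.
End OpApp.
Arguments app {R}.

HB.instance Definition _ (R : fieldType) :=
  GRing.Zmodule_isNzRing.Build (Op R) (@opMA R) (@op1M R) (@opM1 R)
    (@opMDl R) (@opMDr R) (@op1_neq0 R).

Lemma opScalerAl (R : fieldType) (a : R) (A B : Op R) : a *: (A * B) = (a *: A) * B.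
Proof. by apply: funext => j; rewrite scaleOpE /GRing.mul /= /opM appZ. Qed.
HB.instance Definition _ (R : fieldType) :=
  GRing.Lmodule_isLalgebra.Build R (Op R) (@opScalerAl R).
Lemma opScalerAr (R : fieldType) (a : R) (A B : Op R) : a *: (A * B) = A * (a *: B).
Proof. by apply: funext => j; rewrite scaleOpE /GRing.mul /= /opM app_scale. Qed.
HB.instance Definition _ (R : fieldType) :=
  GRing.Lalgebra_isAlgebra.Build R (Op R) (@opScalerAr R).

Definition Ssum (R : pzRingType) (N n m : nat) : R :=
  \sum_(t < m.+1) (-1) ^+ t * ('C(N, t) * 'C(m - t, n))%:R.

Lemma S_small (R : pzRingType) N n m : (m < n)%N -> Ssum R N n m = 0.
Proof.
move=> mn; rewrite /Ssum big1 // => t _.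
have h : (m - t < n)%N by lia.
by rewrite (bin_small h) muln0 mulr0.
Qed.

Lemma S_rec (R : pzRingType) N n m :
  Ssum R N.+1 n m.+1 = Ssum R N n m.+1 - Ssum R N n m.
Proof.
rewrite /Ssum big_ord_recl [in X in _ = X - _]big_ord_recl /=.
rewrite !bin0 !subn0 !expr0 !mul1r.
under eq_bigr => t _ do rewrite /bump /= add1n subSS binS mulnDl natrD mulrDr exprS mulN1r.
rewrite big_split /= addrA; congr (_ + _).
  under [in RHS]eq_bigr => t _ do rewrite /bump /= add1n subSS exprS mulN1r.
  by [].
rewrite -sumrN; apply: eq_bigr => t _; by rewrite mulNr.
Qed.

Lemma S0 (R : pzRingType) n m : Ssum R 0 n m = ('C(m, n))%:R.
Proof.
rewrite /Ssum big_ord_recl big1 ?addr0 => [|t _]; first by rewrite expr0 mul1r bin0 mul1n subn0.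
by rewrite bin0n /= mul0n mulr0.
Qed.

Lemma S_le (R : pzRingType) N n m : (N <= n)%N -> (n <= m)%N ->
  Ssum R N n m = ('C(m - N, n - N))%:R.
Proof.
elim: N m => [|N IH] m Nn nm; first by rewrite S0 !subn0.
case: m nm => [|m] nm; first lia.
rewrite S_rec IH; try lia.
case: (ltnP m n) => mn.
  have -> : n = m.+1 by lia.
  by rewrite S_small // subr0 !binn.
rewrite IH; try lia.
have -> : (m.+1 - N = (m - N).+1)%N by lia.
have -> : (n - N = (n - N.+1).+1)%N by lia.
rewrite binS natrD addrAC subrr add0r.
by have -> : (m.+1 - N.+1 = m - N)%N by lia.
Qed.

Lemma S_top (R : pzRingType) n m : Ssum R n.+1 n m = (m == n)%:R.
Proof.
case: (ltnP m n) => mn.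
  by rewrite S_small // (ltn_eqF mn).
case: m mn => [|m] mn.
  have -> : n = 0%N by lia.
  by rewrite /Ssum big_ord1 /= expr0 mul1r.
rewrite S_rec.
case: (ltnP m n) => mn'.
  have -> : n = m.+1 by lia.
  by rewrite (@S_small _ _ _ m) // subr0 S_le // !subnn bin0 eqxx.
rewrite !S_le // !subnn !bin0 subrr.
by have -> : (m.+1 == n) = false by apply/negbTE; lia.
Qed.

Lemma comb_main (R : comPzRingType) n k l : (k <= n)%N -> (l <= n)%N ->
  \sum_(j < (n - k).+1) (-1) ^+ (n - k - j) * ('C(n.+1, n - k - j))%:R
     * ((j + l) ^_ n)%:R = ((n`! * (l == k))%:R : R).
Proof.
move=> kn ln.
rewrite (reindex_inj rev_ord_inj) /=.
under eq_bigr => t _.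
  have ts : (t <= n - k)%N by case: t => t /=; lia.
  rewrite subSS (subKn ts) -bin_ffact natrM.
  have -> : ((n - k) - t + l = (n - k + l) - t)%N by lia.
  have -> : forall a b c d : R, a * b * (c * d) = (a * (b * c)) * d by move=> *; ring.
  rewrite -natrM.
  over.
rewrite -mulr_suml.
transitivity (Ssum R n.+1 n (n - k + l) * (n`!)%:R); last first.
  rewrite S_top -natrM mulnC; congr (_ * _)%:R.
  by apply/eqP; case: eqP; case: eqP; lia.
rewrite /Ssum; congr (_ * _).
rewrite (big_ord_widen (n - k + l).+1 (fun t => (-1) ^+ t * ('C(n.+1, t) * 'C(n - k + l - t, n))%:R)); last lia.
rewrite big_mkcond; apply: eq_bigr => t _ /=.
case: ifP => // ts.
move/negbT: ts; rewrite -leqNgt => ts.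
have tt := ltn_ord t.
have h : (n - k + l - t < n)%N by lia.
by rewrite (bin_small h) muln0 mulr0.
Qed.

Lemma ffactD x a b : (x ^_ (a + b) = x ^_ a * (x - a) ^_ b)%N.
Proof.
elim: b => [|b IH]; first by rewrite addn0 ffactn0 muln1.
by rewrite addnS !ffactnSr IH -mulnA subnDA.
Qed.

Section Weyl.
Variable C : numClosedFieldType.

Definition qop : Op C := fun j => ('X^j)^`().
Definition pop : Op C := fun j => 'i *: 'X^(j.+1).

Lemma expand_poly (v : {poly C}) : v = \sum_(r < size v) v`_r *: 'X^r.
Proof. by rewrite -poly_def coefK. Qed.

Lemma app_q v : app qop v = v^`().
Proof.
rewrite {2}[v]expand_poly (big_morph _ (@derivD _) (@deriv0 _)).
by apply: eq_bigr => r _; rewrite derivZ.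
Qed.

Lemma app_p v : app pop v = 'i *: (v * 'X).
Proof.
rewrite {2}[v]expand_poly mulr_suml scaler_sumr.
by apply: eq_bigr => r _; rewrite /pop -scalerAl exprSr !scalerA mulrC.
Qed.

Lemma appMul (A B : Op C) v : app (A * B) v = app A (app B v).
Proof. exact: appM. Qed.

Lemma app_exp (A : Op C) n v : app (A ^+ n) v = iter n (app A) v.
Proof.
elim: n v => [|n IH] v; first by rewrite expr0 /= -[1]/(op1 C) app1.
by rewrite exprS appMul IH.
Qed.

Lemma evalE (A : Op C) m : A m = app A 'X^m.
Proof. by rewrite appX. Qed.

Lemma iter_q k v : iter k (app qop) v = v^`(k).
Proof. by elim: k => //= k IH; rewrite IH app_q -derivnS. Qed.

Lemma iter_p n v : iter n (app pop) v = 'i ^+ n *: (v * 'X^n).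
Proof.
elim: n => [|n IH] /=; first by rewrite expr0 mulr1 scale1r.
by rewrite IH app_p -scalerAl scalerA -mulrA -exprSr -exprS.
Qed.

Lemma termE n k m : (k <= n)%N ->
  ((qop ^+ k * pop ^+ n * qop ^+ (n - k)) : Op C) m
  = ('i ^+ n * ((m + k) ^_ n)%:R) *: 'X^m.
Proof.
move=> kn.
rewrite evalE !appMul !app_exp iter_q iter_p iter_q derivnXn.
rewrite mulrnAl -exprD derivnZ derivnMn derivnXn -mulrnA -scaler_nat scalerA.
case: (leqP (n - k) m) => h.
  have -> : (m - (n - k) + n - k = m)%N by lia.
  have -> : (m - (n - k) + n = m + k)%N by lia.
  have -> : ((m + k) ^_ n = (m + k) ^_ k * m ^_ (n - k))%N.
    have {1}-> : n = (k + (n - k))%N by lia.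
    by rewrite ffactD addnK.
  by [].
rewrite (ffact_small h) (@ffact_small (m + k) n) ?muln0 ?mulr0 ?scale0r //; lia.
Qed.

Lemma zE m : (weyl_z pop qop) m = ('i * (m%:R + 2%:R^-1)) *: 'X^m.
Proof.
rewrite /weyl_z scaleOpE addOpE.
change ((qop * pop) m) with (app qop (pop m)).
change ((pop * qop) m) with (app pop (qop m)).
rewrite app_q app_p /pop /qop derivZ !derivXn /=.
rewrite -!scaler_nat -scalerAl.
case: m => [|m] /=.
  by rewrite scale0r scaler0 addr0 scale1r scalerA add0r mulrC.
rewrite -exprSr !scalerA -scalerDl scalerA; congr (_ *: _).
have h2 : (2%:R : C) != 0 by rewrite pnatr_eq0.
by rewrite -!natr1 add0r; field.
Qed.

Lemma rel_pq : weyl_rel pop qop.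
Proof.
rewrite /weyl_rel; apply: funext => j.
rewrite addOpE oppOpE scaleOpE.
change ((qop * pop) j) with (app qop (pop j)).
change ((pop * qop) j) with (app pop (qop j)).
change ((1 : Op C) j) with ('X^j : {poly C}).
rewrite app_q app_p /pop /qop derivZ !derivXn /= -!scaler_nat -scalerAl.
case: j => [|j] /=.
  by rewrite scale0r scaler0 subr0 scale1r.
rewrite -exprSr !scalerA -scalerBl; congr (_ *: _).
by rewrite -!natr1; ring.
Qed.

Lemma zpowE r m : ((weyl_z pop qop) ^+ r) m = ('i * (m%:R + 2%:R^-1)) ^+ r *: 'X^m.
Proof.
rewrite evalE app_exp; elim: r => [|r IH] /=; first by rewrite expr0 scale1r.
by rewrite IH app_scale appX zE scalerA exprSr.
Qed.

Lemma coefX_inj (c d : C) m : c *: 'X^m = d *: 'X^m -> c = d.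
Proof.
by move/(congr1 (fun v : {poly C} => v`_m)); rewrite !coefZ coefXn eqxx !mulr1.
Qed.

Lemma key n (a : nat -> C) (P : {poly C}) : holds_in_weyl n a P ->
  forall m : nat,
  \sum_(k < n.+1) a k * ('i ^+ n * ((m + k) ^_ n)%:R) = P.['i * (m%:R + 2%:R^-1)].
Proof.
move=> H m; have E := H (Op C) pop qop rel_pq.
apply: (@coefX_inj _ _ m).
rewrite horner_coef !scaler_suml.
transitivity ((\sum_(i < n.+1) (a i *: (qop ^+ i * pop ^+ n * qop ^+ (n - i)))) m).
  rewrite sumOpE; apply: eq_bigr => k _; rewrite scaleOpE termE ?scalerA //; by rewrite -ltnS.
rewrite E sumOpE; apply: eq_bigr => r _.
by rewrite scaleOpE zpowE scalerA.
Qed.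
End Weyl.

Theorem theorem3p1 (C : numClosedFieldType) (n : nat) (a : nat -> C)
    (P : {poly C}) :
  associated_poly n a P ->
  forall k : nat, (k <= n)%N ->
    a k = ('i ^+ n * (n`!)%:R)^-1 *
            \sum_(j < (n - k).+1)
               (-1) ^+ (n - k - j) * ('C(n.+1, n - k - j))%:R
               * P.['i * (j%:R + 2%:R^-1)]
    /\
    a k = ('i ^+ n * (n`!)%:R)^-1 *
            \sum_(j < (n - k).+1)
               (-1) ^+ (n - k - j) * ('C(n.+1, n - k - j))%:R
               * \sum_(r < n.+1) P`_r * 'i ^+ r * (j%:R + 2%:R^-1) ^+ r.
Proof.
move=> [sP H] k kn.
have first : a k = ('i ^+ n * (n`!)%:R)^-1 *
            \sum_(j < (n - k).+1)
               (-1) ^+ (n - k - j) * ('C(n.+1, n - k - j))%:R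
               * P.['i * (j%:R + 2%:R^-1)].
  under eq_bigr => j _ do rewrite -(@key _ _ _ _ H).
  under eq_bigr => j _ do rewrite mulr_sumr.
  rewrite exchange_big /=.
  have hl : forall l : 'I_n.+1, \sum_(j < (n - k).+1)
        (-1) ^+ (n - k - j) * ('C(n.+1, n - k - j))%:R * (a l * ('i ^+ n * ((j + l) ^_ n)%:R))
      = a l * 'i ^+ n * (n`! * (nat_of_ord l == k))%:R.
    move=> l; rewrite -comb_main //; last by rewrite -ltnS.
    by rewrite mulr_sumr; apply: eq_bigr => j _; ring.
  under eq_bigr => l _ do rewrite hl.
  have kn' : (k < n.+1)%N by [].
  rewrite (bigD1 (Ordinal kn')) //= big1 => [|l /eqP lk]; last first.
    have -> : (nat_of_ord l == k) = false by apply/eqP => e; apply: lk; apply: val_inj.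
    by rewrite muln0 mulr0.
  rewrite eqxx muln1 addr0.
  have hi : ('i : C) ^+ n != 0 by rewrite expf_neq0 // neq0Ci.
  have hf : ((n`!)%:R : C) != 0 by rewrite pnatr_eq0 -lt0n fact_gt0.
  by rewrite -mulrA mulrCA mulVf ?mulr1 // mulf_neq0.
split => //; rewrite [LHS]first; congr (_ * _); apply: eq_bigr => j _.
rewrite (horner_coef_wide _ sP); congr (_ * _); apply: eq_bigr => r _.
by rewrite exprMn mulrA.
Qed.
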